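(* Let $\beta,\gamma\in(0,1)$ with $\beta\neq\gamma$, and let $\lambda=\frac{1-\beta}{1-\gamma}$. Let $\mathcal{T}$ be the graph with root $\rho$ consisting of a triangle together with the extra vertex $\rho$ attached by an edge to one vertex of the triangle. Then the effective field $R$ of $\mathcal{T}$ satisfies $R\neq1$ and $R\in(\gamma,1/\beta)$.
   Context: For a graph $G=(V,E)$ and $\lambda>0$, $\mu_{G;\beta,\gamma,\lambda}(\sigma)=\lambda^{|\sigma|}\beta^{m_0(\sigma)}\gamma^{m_1(\sigma)}/Z$ for $\sigma:V\to\{0,1\}$, $|\sigma|=\sum_v\sigma(v)$, $m_0,m_1$ the numbers of edges with both endpoints spin $0$, resp. spin $1$. For a graph with distinguished root $\rho$ and $\mu=\mu_{\mathcal{T};\beta,\gamma,\lambda}$, the effective field is $R=\frac{1}{\lambda}\frac{\mu(\sigma(\rho)=1)}{\mu(\sigma(\rho)=0)}$. *)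

(* Defs.v *)
From HB Require Import structures.
From mathcomp Require Import all_boot all_order all_algebra.
Set Implicit Arguments. Unset Strict Implicit. Unset Printing Implicit Defensive.
Import Order.TTheory GRing.Theory Num.Theory.
Local Open Scope ring_scope.

Section Spin.
Variables (R : realFieldType) (V : finType).

(* A finite graph is given by its (simple, undirected) edge list E. *)
Definition cfg := {ffun V -> bool}.  (* true = spin 1, false = spin 0 *)

Definition ones (s : cfg) : nat := #|[set v | s v]|.
Definition m0 (E : seq (V * V)) (s : cfg) : nat :=
  count (fun e => ~~ s e.1 && ~~ s e.2) E.
Definition m1 (E : seq (V * V)) (s : cfg) : nat :=
  count (fun e => s e.1 && s e.2) E.

Definition weight (E : seq (V * V)) (beta gamma lambda : R) (s : cfg) : R :=
  lambda ^+ ones s * beta ^+ m0 E s * gamma ^+ m1 E s.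

Definition partfun E beta gamma lambda : R :=
  \sum_(s : cfg) weight E beta gamma lambda s.

Definition gibbs E beta gamma lambda (s : cfg) : R :=
  weight E beta gamma lambda s / partfun E beta gamma lambda.

Definition root_prob E beta gamma lambda (rho : V) (b : bool) : R :=
  \sum_(s : cfg | s rho == b) gibbs E beta gamma lambda s.

Definition effective_field E beta gamma lambda (rho : V) : R :=
  lambda^-1 * (root_prob E beta gamma lambda rho true
               / root_prob E beta gamma lambda rho false).
End Spin.

(* The graph T: vertices 0 (= root rho), 1, 2, 3; triangle 1-2-3, and
   the pendant edge rho-1. *)
Definition T_root : 'I_4 := @Ordinal 4 0 isT.
Definition T_edges : seq ('I_4 * 'I_4) :=
  [:: (@Ordinal 4 0 isT, @Ordinal 4 1 isT);
      (@Ordinal 4 1 isT, @Ordinal 4 2 isT);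
      (@Ordinal 4 2 isT, @Ordinal 4 3 isT);
      (@Ordinal 4 3 isT, @Ordinal 4 1 isT)].

(* Main.v *)
Require Import Defs.
From HB Require Import structures.
From mathcomp Require Import all_boot all_order all_algebra ring lra.
Import Order.TTheory GRing.Theory Num.Theory.
Local Open Scope ring_scope.

Definition hc (a b c d : bool) : {ffun 'I_4 -> bool} :=
  [ffun i : 'I_4 => nth false [:: a; b; c; d] i].

Lemma sum_cfg (R : realFieldType) (F : {ffun 'I_4 -> bool} -> R) :
  \sum_(s : {ffun 'I_4 -> bool}) F s =
  \sum_(a : bool) \sum_(b : bool) \sum_(c : bool) \sum_(d : bool) F (hc a b c d).
Proof.
pose h (p : bool * (bool * (bool * bool))) := hc p.1 p.2.1 p.2.2.1 p.2.2.2.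
pose g (s : {ffun 'I_4 -> bool}) : bool * (bool * (bool * bool)) :=
  (s (@Ordinal 4 0 isT), (s (@Ordinal 4 1 isT), (s (@Ordinal 4 2 isT), s (@Ordinal 4 3 isT)))).
rewrite (reindex h); last first.
  exists g => [p _|s _].
    by case: p => a [b [c d]]; rewrite /g /h !ffunE.
  apply/ffunP => i; rewrite /g /h ffunE.
  case: i => [[|[|[|[|i]]]] Hi] //=; congr (s _); exact: val_inj.
rewrite -(pair_big xpredT xpredT (fun a q => F (h (a, q)))) /=.
apply: eq_bigr => a _.
rewrite -(pair_big xpredT xpredT (fun b q => F (h (a, (b, q))))) /=.
apply: eq_bigr => b _.
rewrite -(pair_big xpredT xpredT (fun c d => F (h (a, (b, (c, d)))))) /=.
done.
Qed.

Lemma ones_hc a b c d : ones (hc a b c d) = (a + b + c + d)%N.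
Proof.
rewrite /ones -sum1_card big_mkcond /= !big_ord_recl big_ord0 !in_set !ffunE /=.
by case: a; case: b; case: c; case: d.
Qed.

Lemma hcE a b c d i : hc a b c d i = nth false [:: a; b; c; d] i.
Proof. by rewrite ffunE. Qed.

Definition Z1 {R : realFieldType} (be ga l : R) := l * (be + 2 * l * ga + l^+2 * ga^+3).
Definition Z0 {R : realFieldType} (be ga l : R) := be^+3 + 2 * l * be + l^+2 * ga.

Lemma rp (R : realFieldType) (be ga l : R) b :
  root_prob T_edges be ga l T_root b =
  (if b then l * (ga * Z1 be ga l + Z0 be ga l)
   else Z1 be ga l + be * Z0 be ga l) / partfun T_edges be ga l.
Proof.
rewrite /root_prob big_mkcond /= sum_cfg.
rewrite !big_bool /= /gibbs /weight !ones_hc /m0 /m1 /= !hcE /= /Z1 /Z0.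
by case: b => /=; ring.
Qed.

Lemma pf (R : realFieldType) (be ga l : R) :
  partfun T_edges be ga l =
  l * (ga * Z1 be ga l + Z0 be ga l) + (Z1 be ga l + be * Z0 be ga l).
Proof.
rewrite /partfun sum_cfg.
rewrite !big_bool /= /weight !ones_hc /m0 /m1 /= !hcE /= /Z1 /Z0.
ring.
Qed.

Lemma Z1_gt0 (R : realFieldType) (be ga l : R) : 0 < be -> 0 < ga -> 0 < l -> 0 < Z1 be ga l.
Proof.
move=> *; rewrite /Z1 mulr_gt0 // !addr_gt0 // ?mulr_gt0 // ?exprn_gt0 //.
Qed.
Lemma Z0_gt0 (R : realFieldType) (be ga l : R) : 0 < be -> 0 < ga -> 0 < l -> 0 < Z0 be ga l.
Proof.
move=> *; rewrite /Z0 !addr_gt0 // ?mulr_gt0 // ?exprn_gt0 //.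
Qed.

Theorem lemma4p1 (R : realFieldType) (beta gamma : R) :
  0 < beta -> beta < 1 -> 0 < gamma -> gamma < 1 -> beta != gamma ->
  let lambda := (1 - beta) / (1 - gamma) in
  let Rf := effective_field T_edges beta gamma lambda T_root in
  Rf != 1 /\ gamma < Rf /\ Rf < beta^-1.
Proof.
move=> b0 b1 g0 g1 bg lambda Rf.
have l0 : 0 < lambda by rewrite /lambda divr_gt0 // subr_gt0.
have z1 := @Z1_gt0 _ _ _ _ b0 g0 l0.
have z0 := @Z0_gt0 _ _ _ _ b0 g0 l0.
set A := Z1 beta gamma lambda in z1 *; set B := Z0 beta gamma lambda in z0 *.
have P0 : 0 < partfun T_edges beta gamma lambda.
  rewrite pf -/A -/B; apply: addr_gt0.
    by apply: mulr_gt0 => //; apply: addr_gt0 => //; exact: mulr_gt0.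
  by apply: addr_gt0 => //; exact: mulr_gt0.
have D0 : 0 < A + beta * B by apply: addr_gt0 => //; exact: mulr_gt0.
have ERf : Rf = (gamma * A + B) / (A + beta * B).
  rewrite /Rf /effective_field !rp -/A -/B /=.
  by field; rewrite !lt0r_neq0.
have key : (1 - beta) * B - (1 - gamma) * A = (1 - beta) ^+ 3 * (beta - gamma).
  rewrite /A /B /Z1 /Z0 /lambda; field.
  by rewrite subr_eq0 eq_sym lt_eqF.
rewrite ERf; split; last split.
- rewrite -subr_eq0 -[X in _ - X](divff (lt0r_neq0 D0)) -mulrBl mulf_eq0 negb_or.
  rewrite invr_eq0 (lt0r_neq0 D0) andbT.
  have -> : gamma * A + B - (A + beta * B) = (1 - beta) * B - (1 - gamma) * A by ring.
  rewrite key mulf_neq0 // ?expf_neq0 // subr_eq0 //.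
  by rewrite eq_sym lt_eqF.
- rewrite ltr_pdivlMr //.
  have : 0 < (1 - beta * gamma) * B.
    rewrite mulr_gt0 // subr_gt0.
    by rewrite -[1]mulr1 ltr_pM // ?ltW.
  move=> h; rewrite -subr_gt0; move: h.
  by have -> : gamma * A + B - gamma * (A + beta * B) = (1 - beta * gamma) * B by ring.
- rewrite ltr_pdivrMr // -subr_gt0.
  have -> : beta^-1 * (A + beta * B) - (gamma * A + B) = beta^-1 * ((1 - beta * gamma) * A).
    by field; rewrite lt0r_neq0.
  rewrite mulr_gt0 ?invr_gt0 // mulr_gt0 // subr_gt0.
  by rewrite -[1]mulr1 ltr_pM // ?ltW.
Qed.
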